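(* Let $G$ be a distribution function on $\mathbb R$ whose support is $\mathbb J=\bigcup_{\alpha=1}^m[a_\alpha,b_\alpha]$, a union of pairwise disjoint intervals, such that $G$ has a bounded absolutely continuous density $g$ with $g(x)\sim|x-c|^{1/2}$ near each endpoint $c$ of the support. Let $F$ be any distribution function. Let $0<\varepsilon<\frac12\min_\alpha(b_\alpha-a_\alpha)$, let $0<v\le\frac{\varepsilon^{3/2}}{2(\sqrt2+1)}$ and $V>v$. For $x\in\mathbb J'_\varepsilon$ put $v'=v/\sqrt{\gamma(x)}$. Then $$\sup_{x\in\mathbb J'_\varepsilon}\Big|\int_{-\infty}^x\operatorname{Im}\big(S_F(u+iv')-S_G(u+iv')\big)du\Big|\le\int_{-\infty}^{\infty}|S_F(u+iV)-S_G(u+iV)|\,du+\sup_{x\in\mathbb J'_\varepsilon}\Big|\int_{v'}^V\big(S_F(x+iu)-S_G(x+iu)\big)du\Big|.$$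
   Context: For $x\in\mathbb J$, $\gamma(x)=\min_\alpha\{|x-a_\alpha|,|b_\alpha-x|\}$. For $\varepsilon>0$, $\mathbb J_\alpha^{(\varepsilon)}=\{x\in[a_\alpha,b_\alpha]:\gamma(x)\ge\varepsilon\}$ and $\mathbb J'_\varepsilon=\bigcup_{\alpha=1}^m\mathbb J_\alpha^{(\varepsilon/2)}$. For a distribution function $F$, $S_F(z)=\int_{-\infty}^\infty\frac{1}{x-z}\,dF(x)$ is its Stieltjes transform ($\operatorname{Im}z>0$). *)

(* Defs.v *)
From HB Require Import structures.
From mathcomp Require Import all_boot all_order all_algebra.
From mathcomp Require Import all_classical all_reals all_analysis.

Set Implicit Arguments.
Unset Strict Implicit.
Unset Printing Implicit Defensive.
Import Order.TTheory GRing.Theory Num.Theory.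
Import numFieldNormedType.Exports.
Local Open Scope classical_set_scope.
Local Open Scope ring_scope.

Section Defs.
Variable R : realType.

(* This is the library structure
   [cumulativeBounded 0 1]; its Lebesgue-Stieltjes measure dF is
   [lebesgue_stieltjes_measure F]. *)
Definition distr_fun := cumulativeBounded (0:R) (1:R).

Definition distr_support (F : R -> R) : set R :=
  [set x | forall e : R, 0 < e -> F (x - e) < F (x + e)].

Definition Jset (m : nat) (a b : 'I_m -> R) : set R :=
  [set x | exists i, a i <= x <= b i].

Definition gammaJ (m : nat) (a b : 'I_m -> R) (x : R) : R :=
  inf [set Num.min `|x - a i| `|b i - x| | i in [set: 'I_m]].

Definition Jprime (m : nat) (a b : 'I_m -> R) (eps : R) : set R :=
  [set x | exists i, a i <= x <= b i /\ eps / 2 <= gammaJ a b x].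

Definition abs_continuous_fun (f : R -> R) : Prop :=
  forall e : R, 0 < e -> exists2 d : R, 0 < d &
    forall (n : nat) (s t : 'I_n -> R),
      (forall k, s k <= t k) ->
      (forall k l, k != l -> t k <= s l \/ t l <= s k) ->
      \sum_(k < n) (t k - s k) < d ->
      \sum_(k < n) `|f (t k) - f (s k)| < e.

Definition sqrt_behaviour_near (g : R -> R) (J : set R) (c : R) : Prop :=
  exists C1 C2 d : R, [/\ 0 < C1, 0 < C2, 0 < d &
    forall x, J x -> `|x - c| < d ->
      C1 * Num.sqrt `|x - c| <= g x <= C2 * Num.sqrt `|x - c| ].

(* Stieltjes transform S_F(z) = \int 1/(y - z) dF(y), z = u + i v, given by
   its real and imaginary parts:
   1/(y - u - i v) = ((y - u) + i v) / ((y - u)^2 + v^2). *)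
Definition stieltjes_re (F : distr_fun) (u v : R) : R :=
  \int[lebesgue_stieltjes_measure F]_y ((y - u) / ((y - u) ^+ 2 + v ^+ 2)).
Definition stieltjes_im (F : distr_fun) (u v : R) : R :=
  \int[lebesgue_stieltjes_measure F]_y (v / ((y - u) ^+ 2 + v ^+ 2)).

Definition cmod (p q : R) : R := Num.sqrt (p ^+ 2 + q ^+ 2).

Definition oint (s t : R) (f : R -> R) : R :=
  if s <= t then \int[lebesgue_measure]_(u in `[s, t]) f u
  else - \int[lebesgue_measure]_(u in `[t, s]) f u.

End Defs.

(* Main.v *)
Require Import Defs.
From HB Require Import structures.
From mathcomp Require Import all_boot all_order all_algebra.
From mathcomp Require Import all_classical all_reals all_analysis.
From mathcomp Require Import measurable_realfun.
From mathcomp Require Import ring lra.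
Import Order.TTheory GRing.Theory Num.Theory.
Import numFieldNormedType.Exports.
Local Open Scope classical_set_scope.
Local Open Scope ring_scope.

Section H.
Context {R : realType}.
Local Notation lam := (@lebesgue_measure R).

Lemma mfunV_pos d (T : measurableType d) (D : set T) (g : T -> R) :
  measurable D -> measurable_fun D g -> (forall x, D x -> 0 < g x) ->
  measurable_fun D (fun x => (g x)^-1).
Proof.
move=> mD mg g0.
change (measurable_fun D (GRing.inv \o g)).
apply: (@measurable_comp _ _ _ _ _ _ (`]0, +oo[%classic : set R)) => //.
- move=> _ [x Dx <-]; rewrite /= in_itv /= andbT; exact: g0.
- apply: open_continuous_measurable_fun; first exact: interval_open.
  move=> x; rewrite inE /= in_itv /= andbT => x0.
  by apply: inv_continuous; rewrite gt_eqF.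
Qed.

Lemma isd_re (tau u : R) : u != 0 ->
  is_derive u 1 (fun u => - atan (tau * u^-1)) (tau / (tau ^+ 2 + u ^+ 2)).
Proof.
move=> u0.
have h1 : is_derive u 1 (fun u : R => u^-1) (- u ^- 2 *: 1).
  exact: is_deriveV.
have h2 : is_derive u 1 (fun u : R => tau * u^-1) (tau *: (- u ^- 2 *: 1)).
  exact: (is_deriveZ tau h1).
have h3 : is_derive u 1 (atan \o (fun u : R => tau * u^-1))
   ((1 + (tau * u^-1) ^+ 2)^-1 * (tau * (- u ^- 2 *: 1))).
  exact: is_derive1_comp.
have h5 := is_deriveN h3.
apply: (is_derive_eq h5).
have h4 : 0 < tau ^+ 2 + u ^+ 2.
  have hu2 : 0 < u ^+ 2 by rewrite lt_neqAle sqr_ge0 andbT eq_sym sqrf_eq0.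
  by apply: ltr_wpDl; [exact: sqr_ge0|].
have -> : (- u ^- 2)%:A = - u ^- 2 :> R by rewrite /GRing.scale /= mulr1.
have hu : 1 + (tau / u) ^+ 2 != 0.
  by rewrite gt_eqF //; have := sqr_ge0 (tau / u); lra.
field.
by rewrite gt_eqF // u0.
Qed.

Lemma cont_rat (a b c : R) (u : R) : b + (u + c) ^+ 2 != 0 ->
  {for u, continuous (fun u : R => a / (b + (u + c) ^+ 2))}.
Proof.
move=> h.
apply: cvgM; first exact: cvg_cst.
apply: cvgV => //.
apply: cvgD; first exact: cvg_cst.
apply: (@cvg_comp _ _ _ (fun u => u + c) (fun z => z ^+ 2)); last first.
  exact: exprn_continuous.
apply: cvgD; [exact: cvg_id | exact: cvg_cst].
Qed.

Lemma cont_rat0 (a b : R) (u : R) : b + u ^+ 2 != 0 ->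
  {for u, continuous (fun u : R => a / (b + u ^+ 2))}.
Proof.
move=> h.
have -> : (fun u : R => a / (b + u ^+ 2)) = (fun u => a / (b + (u + 0) ^+ 2)).
  by apply/funext => v; rewrite addr0.
by apply: cont_rat; rewrite addr0.
Qed.

Lemma der_cont {h : R -> R} {x d : R} : is_derive x 1 h d -> {for x, continuous h}.
Proof. by move=> [dh _]; exact/differentiable_continuous/derivable1_diffP. Qed.

Lemma int_re (tau s t : R) : 0 < s -> s <= t ->
  (\int[lam]_(u in `[s, t]) (tau / (tau ^+ 2 + u ^+ 2))%:E
    = (atan (tau / s) - atan (tau / t))%:E)%E.
Proof.
move=> s0; rewrite le_eqVlt => /predU1P[<-|st].
  by rewrite set_itv1 integral_set1 subrr.
have u0 u : s <= u -> u != 0 by move=> su; rewrite gt_eqF // (lt_le_trans s0 su).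
rewrite (@continuous_FTC2 _ _ (fun u => - atan (tau * u^-1))) //.
- by rewrite -EFinB opprK addrC.
- apply: continuous_in_subspaceT => u; rewrite inE /= in_itv /= => /andP[su _].
  apply: cont_rat0.
  have hu2 : 0 < u ^+ 2 by rewrite lt_neqAle sqr_ge0 andbT eq_sym sqrf_eq0 u0.
  by rewrite gt_eqF //; have := sqr_ge0 tau; lra.
- split.
  + move=> u; rewrite in_itv /= => /andP[su _].
    by have [] := @isd_re tau u (u0 _ (ltW su)).
  + have := der_cont (@isd_re tau s (u0 _ (lexx s))); exact: cvg_at_right_filter.
  + have := der_cont (@isd_re tau t (u0 _ (ltW st))); exact: cvg_at_left_filter.
- move=> u; rewrite in_itv /= => /andP[su _].
  by rewrite derive1E; have [_ ->] := @isd_re tau u (u0 _ (ltW su)).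
Qed.

Lemma isd_im (w z u : R) : 0 < w ->
  is_derive u 1 (fun u => atan (w^-1 * (u + z))) (w / ((z + u) ^+ 2 + w ^+ 2)).
Proof.
move=> w0.
have h1 : is_derive u 1 (fun u : R => u + z) (1 + 0).
  by apply: is_deriveD.
have h2 : is_derive u 1 (fun u : R => w^-1 * (u + z)) (w^-1 *: (1 + 0)).
  exact: (is_deriveZ w^-1 h1).
have h3 : is_derive u 1 (atan \o (fun u : R => w^-1 * (u + z)))
   ((1 + (w^-1 * (u + z)) ^+ 2)^-1 * (w^-1 *: (1 + 0))).
  exact: is_derive1_comp.
apply: (is_derive_eq h3).
have hw : w != 0 by rewrite gt_eqF.
have h4 : (z + u) ^+ 2 + w ^+ 2 != 0.
  by rewrite gt_eqF //; have := sqr_ge0 (z + u); have := exprn_gt0 2 w0; lra.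
have hu : 1 + (w^-1 * (u + z)) ^+ 2 != 0.
  by rewrite gt_eqF //; have := sqr_ge0 (w^-1 * (u + z)); lra.
rewrite /= addr0.
have -> : w^-1 *: 1 = w^-1 :> R by rewrite /GRing.scale /= mulr1.
field.
by rewrite h4 hw.
Qed.

Lemma int_im (w z x : R) : 0 < w ->
  (\int[lam]_(u in `]-oo, x]) (w / ((z - u) ^+ 2 + w ^+ 2))%:E
    = (atan ((x - z) / w) + pi / 2)%:E)%E.
Proof.
move=> w0.
have pos v : 0 < v ^+ 2 + w ^+ 2.
  by have := sqr_ge0 v; have := exprn_gt0 2 w0; lra.
rewrite -[x]opprK ge0_integration_by_substitutionNy; last 2 first.
- apply: continuous_subspaceT => u.
  have -> : (fun u : R => w / ((z - u) ^+ 2 + w ^+ 2))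
          = (fun u => w / (w ^+ 2 + (u + - z) ^+ 2)).
    by apply/funext => v; congr (_ / _); ring.
  by apply: cont_rat; rewrite addrC gt_eqF.
- move=> u _; apply: divr_ge0; [exact: ltW | exact: ltW].
rewrite (@ge0_continuous_FTC2y _ _ (fun u => atan (w^-1 * (u + z))) _ (pi / 2)).
- rewrite opprK -EFinB; congr EFin.
  have -> : w^-1 * (- x + z) = - ((x - z) / w) by rewrite mulrC; ring.
  rewrite atanN; lra.
- move=> u _; apply: divr_ge0; [exact: ltW | exact: ltW].
- apply: continuous_subspaceT => u.
  have -> : ((fun u : R => w / ((z - u) ^+ 2 + w ^+ 2)) \o -%R)
          = (fun u => w / (w ^+ 2 + (u + z) ^+ 2)).
    by apply/funext => v; rewrite /=; congr (_ / _); ring.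
  by apply: cont_rat; rewrite addrC gt_eqF.
- apply: cvg_comp; last exact: cvgy_atan.
  apply/cvgryPge => A; exists (A * w - z); split; first exact: num_real.
  move=> u hu; rewrite mulrC ler_pdivlMr //; lra.
- move=> u _; by have [] := @isd_im w z u w0.
- have := der_cont (@isd_im w z (- x) w0); exact: cvg_at_right_filter.
- move=> u _; rewrite derive1E; have [_ ->] := @isd_im w z u w0.
  by rewrite /= opprK.
Qed.

Lemma le_int_nomeas d (T : measurableType d) (mu : {measure set T -> \bar R})
  (f g : T -> \bar R) : (forall x, 0 <= f x)%E -> (forall x, f x <= g x)%E ->
  (\int[mu]_x f x <= \int[mu]_x g x)%E.
Proof.
move=> f0 fg.
rewrite !ge0_integralTE //; last by move=> x; apply: le_trans (f0 x) (fg x).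
apply: ereal_sup_le => _ [h /= hf <-]; exists h => //= x.
exact: le_trans (hf x) (fg x).
Qed.
End H.

Section A.
Context {R : realType} (F : distr_fun R).
Local Notation muF := (lebesgue_stieltjes_measure F).
Local Notation lam := (@lebesgue_measure R).

Lemma muF_setT : muF setT = 1%E.
Proof. exact: probability_setT. Qed.

Lemma bnd_int {h : R -> R} {M : R} : measurable_fun setT h ->
  (forall y, `|h y| <= M) -> muF.-integrable setT (EFin \o h).
Proof.
move=> mh hM; apply: measurable_bounded_integrable => //.
- by apply: (@le_lt_trans _ _ 1%E); [rewrite -muF_setT | exact: ltry].
- exists M; split; first exact: num_real.
  by move=> r Mr y _; apply: le_trans (hM y) (ltW Mr).
Qed.

Lemma Rint_fin {h : R -> R} {M : R} : measurable_fun setT h ->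
  (forall y, `|h y| <= M) -> (\int[muF]_y h y)%:E = (\int[muF]_y (h y)%:E)%E.
Proof.
move=> mh hM; rewrite /Rintegral fineK //.
have := integrable_fin_num measurableT (bnd_int mh hM); exact.
Qed.


Lemma kI_cont (u w : R) : 0 < w -> continuous (fun y : R => w / ((y - u) ^+ 2 + w ^+ 2)).
Proof.
move=> w0 y.
have -> : (fun y : R => w / ((y - u) ^+ 2 + w ^+ 2))
        = (fun y => w / (w ^+ 2 + (y + - u) ^+ 2)).
  by apply/funext => v; congr (_ / _); ring.
apply: cont_rat; rewrite gt_eqF //.
by have := sqr_ge0 (y + - u); have := exprn_gt0 2 w0; lra.
Qed.

Lemma kI_ge0 (u w y : R) : 0 < w -> 0 <= w / ((y - u) ^+ 2 + w ^+ 2).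
Proof.
move=> w0; apply: divr_ge0; first exact: ltW.
by have := sqr_ge0 (y - u); have := exprn_gt0 2 w0; lra.
Qed.

Lemma kI_bnd (u w y : R) : 0 < w -> `|w / ((y - u) ^+ 2 + w ^+ 2)| <= w^-1.
Proof.
move=> w0; rewrite ger0_norm; last exact: kI_ge0.
have hD : 0 < (y - u) ^+ 2 + w ^+ 2.
  by have := sqr_ge0 (y - u); have := exprn_gt0 2 w0; lra.
have e : w / ((y - u) ^+ 2 + w ^+ 2) = w^-1 * (w ^+ 2 / ((y - u) ^+ 2 + w ^+ 2)).
  by field; rewrite !gt_eqF.
rewrite e -[X in _ <= X]mulr1 ler_pM2l ?invr_gt0 // ler_pdivrMr // mul1r.
by have := sqr_ge0 (y - u); lra.
Qed.

Lemma atan_bnd (z : R) : `|atan z| <= pi / 2.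
Proof.
have := atan_gtNpi2 z; have := atan_ltpi2 z => h1 h2.
by rewrite ler_norml; apply/andP; split; lra.
Qed.

Lemma atn_cont (x w : R) : continuous (fun y : R => atan ((x - y) / w)).
Proof.
move=> y; apply: continuous_comp; last exact: continuous_atan.
apply: cvgM; last exact: cvg_cst.
by apply: cvgB; [exact: cvg_cst | exact: cvg_id].
Qed.

Lemma atn_cont' (x w : R) : continuous (fun y : R => atan ((y - x) / w)).
Proof.
move=> y; apply: continuous_comp; last exact: continuous_atan.
apply: cvgM; last exact: cvg_cst.
by apply: cvgB; [exact: cvg_id | exact: cvg_cst].
Qed.

Lemma A_all (w x : R) : 0 < w ->
  [/\ measurable_fun setT (fun u => stieltjes_im F u w),
      lam.-integrable `]-oo, x] (EFin \o (fun u => stieltjes_im F u w)) &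
      \int[lam]_(u in `]-oo, x]) stieltjes_im F u w
        = \int[muF]_y (atan ((x - y) / w) + pi / 2)].
Proof.
move=> w0.
pose k u y := w / ((y - u) ^+ 2 + w ^+ 2).
have mk u : measurable_fun setT (k u) := continuous_measurable_fun (@kI_cont u w w0).
have imE u : (stieltjes_im F u w)%:E = (\int[muF]_y (k u y)%:E)%E.
  have := Rint_fin (mk u) (fun y => kI_bnd u w y w0); rewrite /stieltjes_im; exact.
have mk2 : measurable_fun setT (fun p : measurableTypeR R * measurableTypeR R => k p.1 p.2).
  apply: measurable_funM; first exact: measurable_cst.
  apply: mfunV_pos => //.
    apply: measurable_funD; last exact: measurable_cst.
    apply: measurable_funX; apply: measurable_funB.
      exact: measurable_snd.
    exact: measurable_fst.
  move=> p _; by have := sqr_ge0 (p.2 - p.1); have := exprn_gt0 2 w0; lra.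
have k0 u y : 0 <= k u y by exact: kI_ge0.
have mf : measurable_fun setT
    (fun p : measurableTypeR R * measurableTypeR R => (k p.1 p.2)%:E).
  exact/measurable_EFinP.
have ma : measurable_fun setT (fun u => stieltjes_im F u w).
  apply/measurable_EFinP.
  have f0 : forall p : measurableTypeR R * measurableTypeR R, (0 <= (k p.1 p.2)%:E)%E.
    by move=> p; rewrite lee_fin.
  have := @measurable_fun_fubini_tonelli_F _ _ _ _ _ muF _ mf f0.
  have -> : fubini_F muF (fun p : measurableTypeR R * measurableTypeR R => (k p.1 p.2)%:E)
      = EFin \o (fun u => stieltjes_im F u w).
    by apply/funext => u; rewrite /fubini_F /= imE.
  by [].
pose D := `]-oo, x]%classic : set R.
pose f1 (p : measurableTypeR R * measurableTypeR R) := ((\1_D p.1) * k p.1 p.2)%:E.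
have mf1 : measurable_fun setT f1.
  apply/measurable_EFinP; apply: measurable_funM => //.
  have mD : measurable D by exact: measurable_itv.
  exact: (measurableT_comp (measurable_indic mD) measurable_fst).
have f10 p : (0 <= f1 p)%E.
  by rewrite lee_fin mulr_ge0 // indicE.
have T := @fubini_tonelli _ _ _ _ _ lam muF f1 mf1 f10.
have L : (\int[lam]_u \int[muF]_y f1 (u, y)
    = \int[lam]_(u in D) (stieltjes_im F u w)%:E)%E.
  rewrite [RHS]integral_mkcond; apply: eq_integral => u _ /=.
  rewrite /f1 /= indicE /patch; case: ifPn => uD.
    by under eq_integral do rewrite mul1r; rewrite imE.
  by apply: integral0_eq => y _; rewrite mul0r.
have Rr : (\int[muF]_y \int[lam]_u f1 (u, y)
    = \int[muF]_y (atan ((x - y) / w) + pi / 2)%:E)%E.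
  apply: eq_integral => y _.
  rewrite -(@int_im _ w y x w0) [in RHS]integral_mkcond; apply: eq_integral => u _ /=.
  rewrite /f1 /= indicE /patch; case: ifPn => uD; first by rewrite mul1r.
  by rewrite mul0r.
have H : (\int[lam]_(u in D) (stieltjes_im F u w)%:E
    = (\int[muF]_y (atan ((x - y) / w) + pi / 2))%:E)%E.
  rewrite -L T Rr; symmetry; apply: (Rint_fin (M := pi)).
    apply: continuous_measurable_fun => y.
    apply: cvgD; [exact: atn_cont | exact: cvg_cst].
  move=> y; apply: le_trans (ler_normD _ _) _.
  have hp : `|pi / 2| = pi / 2 :> R by rewrite ger0_norm // divr_ge0 // pi_ge0.
  by rewrite hp; have := atan_bnd ((x - y) / w); lra.
have im0 u : 0 <= stieltjes_im F u w.
  by apply: Rintegral_ge0 => y _; exact: k0.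
split => //.
- apply/integrableP; split.
    by apply/measurable_EFinP; apply: measurable_funS ma.
  under eq_integral do rewrite /= ger0_norm ?im0 //.
  by rewrite H ltry.
- by rewrite /Rintegral H.
Qed.

Lemma int_cst_muF (c : R) : (\int[muF]_y (c%:E) = c%:E)%E.
Proof.
transitivity (c%:E * muF setT)%E; first exact: (@integral_cst _ _ _ muF setT measurableT c%:E).
have -> : muF setT = 1%E by exact: muF_setT.
by rewrite mule1.
Qed.

Lemma kR_cont (x u : R) : u != 0 ->
  continuous (fun y : R => (y - x) / ((y - x) ^+ 2 + u ^+ 2)).
Proof.
move=> u0 y.
have hu2 : 0 < u ^+ 2 by rewrite lt_neqAle sqr_ge0 andbT eq_sym sqrf_eq0.
apply: cvgM; first by apply: cvgB; [exact: cvg_id | exact: cvg_cst].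
apply: cvgV; first by rewrite gt_eqF //; have := sqr_ge0 (y - x); lra.
apply: cvgD; last exact: cvg_cst.
apply: (@cvg_comp _ _ _ (fun y => y - x) (fun z => z ^+ 2)); last first.
  exact: exprn_continuous.
by apply: cvgB; [exact: cvg_id | exact: cvg_cst].
Qed.

Lemma kR_bnd (x u y s : R) : 0 < s -> s <= u ->
  `|(y - x) / ((y - x) ^+ 2 + u ^+ 2)| <= s^-1.
Proof.
move=> s0 su.
have u0 : 0 < u by exact: lt_le_trans s0 su.
have hD : 0 < (y - x) ^+ 2 + u ^+ 2.
  by have := sqr_ge0 (y - x); have := exprn_gt0 2 u0; lra.
rewrite normrM normfV (ger0_norm (ltW hD)).
have ha : `|y - x| ^+ 2 = (y - x) ^+ 2 by rewrite real_normK // num_real.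
have a0 : 0 <= `|y - x| by [].
have key : `|y - x| * s <= (y - x) ^+ 2 + u ^+ 2.
  rewrite -ha.
  have h1 : 0 <= (`|y - x| - s) ^+ 2 by exact: sqr_ge0.
  have h2 : 0 <= (u - s) * (u + s) by apply: mulr_ge0; lra.
  nra.
have -> : `|y - x| / ((y - x) ^+ 2 + u ^+ 2)
    = (`|y - x| * s / ((y - x) ^+ 2 + u ^+ 2)) * s^-1.
  by field; rewrite !gt_eqF.
rewrite -[X in _ <= X]mul1r ler_pM2r ?invr_gt0 // ler_pdivrMr // mul1r.
exact: key.
Qed.

Lemma B_all (x s t : R) : 0 < s -> s <= t ->
  lam.-integrable `[s, t] (EFin \o (fun u => stieltjes_re F x u)) /\
  \int[lam]_(u in `[s, t]) stieltjes_re F x u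
    = \int[muF]_y (atan ((y - x) / s) - atan ((y - x) / t)).
Proof.
move=> s0 st.
pose E := `[s, t]%classic : set R.
have mE : measurable E by exact: measurable_itv.
pose kR (u y : R) := (y - x) / ((y - x) ^+ 2 + u ^+ 2).
have Es u : E u -> s <= u by rewrite /E /= in_itv /= => /andP[].
have u0 u : E u -> u != 0 by move=> /Es su; rewrite gt_eqF // (lt_le_trans s0 su).
have mkR u : E u -> measurable_fun setT (kR u).
  by move=> Eu; exact: continuous_measurable_fun (@kR_cont x u (u0 u Eu)).
have reE u : E u -> (stieltjes_re F x u)%:E = (\int[muF]_y (kR u y)%:E)%E.
  move=> Eu; have := Rint_fin (mkR u Eu) (fun y => @kR_bnd x u y s s0 (Es u Eu)).
  by rewrite /stieltjes_re; exact.
pose g (p : measurableTypeR R * measurableTypeR R) :=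
  \1_E p.1 * ((p.2 - x) / ((p.2 - x) ^+ 2 + (Num.max p.1 s) ^+ 2)).
have gE p : g p = \1_E p.1 * kR p.1 p.2.
  rewrite /g /kR indicE; case: (boolP (p.1 \in E)) => pE; last by rewrite !mul0r.
  have h : s <= p.1 by apply: Es; rewrite inE in pE.
  by rewrite (max_idPl h).
pose f p := (g p)%:E.
have mg : measurable_fun setT g.
  apply: measurable_funM.
    exact: (measurableT_comp (measurable_indic mE) measurable_fst).
  apply: measurable_funM.
    by apply: measurable_funB; [exact: measurable_snd | exact: measurable_cst].
  apply: mfunV_pos => //.
    apply: measurable_funD; apply: measurable_funX.
      by apply: measurable_funB; [exact: measurable_snd | exact: measurable_cst].
    by apply: measurable_maxr; [exact: measurable_fst | exact: measurable_cst].
  move=> p _; have hm : s <= Num.max p.1 s by rewrite le_max lexx orbT.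
  have := sqr_ge0 (p.2 - x); have := exprn_gt0 2 (lt_le_trans s0 hm); lra.
have mf : measurable_fun setT f by exact/measurable_EFinP.
have gb p : `|g p| <= \1_E p.1 * s^-1.
  rewrite gE normrM indicE; case: (boolP (p.1 \in E)) => pE.
    rewrite normr1 !mul1r; apply: kR_bnd => //; apply: Es; by rewrite inE in pE.
  by rewrite normr0 !mul0r.
have imf : ((lam \x muF)%E).-integrable setT f.
  apply/(@integrable12ltyP _ _ _ _ _ lam muF f mf).
  apply: (@le_lt_trans _ _ (\int[lam]_u (\1_E u * s^-1)%:E)%E).
    apply: le_int_nomeas.
      by move=> u; apply: integral_ge0 => y _; exact: abse_ge0.
    move=> u.
    apply: (@le_trans _ _ (\int[muF]_y ((\1_E u * s^-1)%:E))%E).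
      apply: le_int_nomeas => y; first exact: abse_ge0.
      by rewrite /f /= lee_fin; exact: gb (u, y).
    by rewrite int_cst_muF.
  have -> : (\int[lam]_u (\1_E u * s^-1)%:E = \int[lam]_(u in E) (s^-1)%:E)%E.
    rewrite [RHS]integral_mkcond; apply: eq_integral => u _ /=.
    rewrite indicE /patch; case: ifPn => uE; by rewrite ?mul1r ?mul0r.
  have -> : (\int[lam]_(u in E) (s^-1)%:E = (s^-1)%:E * lam E)%E.
    exact: (@integral_cst _ _ _ lam E mE (s^-1)%:E).
  rewrite lebesgue_measure_itv /=.
  by case: ifP => _; rewrite -?EFinB -?EFinM ?mule0 ltry.
have Fb := @Fubini _ _ _ _ _ lam muF f imf.
have LE u : fubini_F muF f u = ((EFin \o (fun u => stieltjes_re F x u)) \_ E) u.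
  rewrite /fubini_F /patch; case: ifPn => uE.
    under eq_integral do rewrite /f gE indicE uE mul1r.
    by rewrite /= reE //; rewrite inE in uE.
  by apply: integral0_eq => y _; rewrite /f gE indicE (negbTE uE) mul0r.
have Rr : (\int[muF]_y \int[lam]_u f (u, y)
    = \int[muF]_y (atan ((y - x) / s) - atan ((y - x) / t))%:E)%E.
  apply: eq_integral => y _.
  rewrite -(@int_re _ (y - x) s t s0 st) [in RHS]integral_mkcond.
  apply: eq_integral => u _ /=.
  rewrite /f gE indicE /patch; case: ifPn => uE; first by rewrite mul1r.
  by rewrite mul0r.
have H : (\int[lam]_(u in E) (stieltjes_re F x u)%:E
    = (\int[muF]_y (atan ((y - x) / s) - atan ((y - x) / t)))%:E)%E.
  rewrite integral_mkcond.
  rewrite (eq_integral (fubini_F muF f)); last by move=> u _; rewrite LE.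
  rewrite /fubini_F Fb Rr; symmetry; apply: (Rint_fin (M := pi)).
    apply: continuous_measurable_fun => y.
    by apply: cvgB; exact: atn_cont'.
  move=> y; apply: le_trans (ler_normB _ _) _.
  have := atan_bnd ((y - x) / s); have := atan_bnd ((y - x) / t); lra.
split.
- apply/integrable_mkcond => //.
  have -> : ((EFin \o (fun u => stieltjes_re F x u)) \_ E) = fubini_F muF f.
    by apply/funext => u; rewrite LE.
  exact: integrable_fubini_F imf.
- by rewrite /Rintegral H.
Qed.
End A.

Section C.
Context {R : realType}.
Local Notation lam := (@lebesgue_measure R).

Lemma cmod_ger (p q : R) : `|p| <= cmod p q.
Proof.
rewrite /cmod -sqrtr_sqr; apply: ler_wsqrtr.
by rewrite lerDl sqr_ge0.
Qed.

Lemma cmod_gei (p q : R) : `|q| <= cmod p q.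
Proof.
rewrite /cmod -sqrtr_sqr; apply: ler_wsqrtr.
by rewrite lerDr sqr_ge0.
Qed.

Definition PP (H : distr_fun R) (x w : R) :=
  \int[lebesgue_stieltjes_measure H]_y (atan ((x - y) / w) + pi / 2).

Lemma PP_int (H : distr_fun R) (x w : R) :
  (lebesgue_stieltjes_measure H).-integrable setT
     (EFin \o (fun y => atan ((x - y) / w) + pi / 2)).
Proof.
apply: (@bnd_int R H _ pi).
  apply: continuous_measurable_fun => y.
  by apply: cvgD; [exact: atn_cont | exact: cvg_cst].
move=> y; apply: le_trans (ler_normD _ _) _.
have hp : `|pi / 2| = pi / 2 :> R by rewrite ger0_norm // divr_ge0 // pi_ge0.
by rewrite hp; have := atan_bnd ((x - y) / w); lra.
Qed.

Lemma P_diff (H : distr_fun R) (x s t : R) : 0 < s -> s <= t ->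
  \int[lam]_(u in `[s, t]) stieltjes_re H x u = PP H x t - PP H x s.
Proof.
move=> s0 st; rewrite (B_all H x s t s0 st).2 /PP -RintegralB //; try exact: PP_int.
apply: eq_Rintegral => y _.
have e1 : (y - x) / s = - ((x - y) / s) by rewrite -mulNr opprB.
have e2 : (y - x) / t = - ((x - y) / t) by rewrite -mulNr opprB.
rewrite e1 e2 !atanN; lra.
Qed.

Lemma P_im (H : distr_fun R) (x w : R) : 0 < w ->
  \int[lam]_(u in `]-oo, x]) stieltjes_im H u w = PP H x w.
Proof. by move=> w0; have [_ _ ->] := A_all H w x w0. Qed.


Lemma oint_re (F G : distr_fun R) (x w V : R) : 0 < w -> 0 < V ->
  oint w V (fun u => stieltjes_re F x u - stieltjes_re G x u)
  = (PP F x V - PP G x V) - (PP F x w - PP G x w).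
Proof.
move=> w0 V0; rewrite /oint; case: ifPn => wV.
  have i1 := (B_all F x w V w0 wV).1.
  have i2 := (B_all G x w V w0 wV).1.
  have m1 : measurable (`[w, V]%classic : set (measurableTypeR R)) by exact: measurable_itv.
  rewrite (RintegralB m1 i1 i2).
  rewrite !P_diff //.
  set a := PP F x V; set b := PP F x w; set c := PP G x V; set d := PP G x w.
  clearbody a b c d; lra.
have Vw : V <= w by move: wV; rewrite -ltNge => /ltW.
have i1 := (B_all F x V w V0 Vw).1.
have i2 := (B_all G x V w V0 Vw).1.
have m1 : measurable (`[V, w]%classic : set (measurableTypeR R)) by exact: measurable_itv.
rewrite (RintegralB m1 i1 i2).
rewrite !P_diff //.
set a := PP F x V; set b := PP F x w; set c := PP G x V; set d := PP G x w.
clearbody a b c d; lra.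
Qed.

Lemma key_pt (F G : distr_fun R) (x w V : R) : 0 < w -> 0 < V ->
  ((`| \int[lam]_(u in `]-oo, x]) (stieltjes_im F u w - stieltjes_im G u w) |)%:E
   <= integral lam setT (fun u => (cmod (stieltjes_re F u V - stieltjes_re G u V)
                        (stieltjes_im F u V - stieltjes_im G u V))%:E)
      + (cmod (oint w V (fun u => stieltjes_re F x u - stieltjes_re G x u))
              (oint w V (fun u => stieltjes_im F x u - stieltjes_im G x u)))%:E)%E.
Proof.
move=> w0 V0.
have [_ iFw _] := A_all F w x w0.
have [_ iGw _] := A_all G w x w0.
have [_ iFV _] := A_all F V x V0.
have [_ iGV _] := A_all G V x V0.
have mD : measurable (`]-oo, x]%classic : set (measurableTypeR R)) by exact: measurable_itv.
rewrite (RintegralB mD iFw iGw) (P_im F x w w0) (P_im G x w w0).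
have iB : lam.-integrable `]-oo, x]
    (EFin \o (fun u => stieltjes_im F u V - stieltjes_im G u V)).
  apply: (eq_integrable mD _ _ _ (integrableB mD iFV iGV)) => u _.
  by rewrite /= EFinB.
set I := integral _ _ _.
have h1 : ((`|PP F x V - PP G x V|)%:E <= I)%E.
  rewrite -(P_im F x V V0) -(P_im G x V V0) -(RintegralB mD iFV iGV).
  apply: (@le_trans _ _ ((\int[lam]_(u in `]-oo, x])
          `|stieltjes_im F u V - stieltjes_im G u V|)%:E)).
    by rewrite lee_fin; exact: le_normr_Rintegral mD iB.
  have iN := integrable_norm iB.
  rewrite /Rintegral fineK; last by have := integrable_fin_num mD iN.
  rewrite integral_mkcond; apply: le_int_nomeas.
    by move=> u; rewrite /patch; case: ifP => _ //; rewrite lee_fin normr_ge0.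
  move=> u; rewrite /patch; case: ifP => _; rewrite lee_fin.
    exact: cmod_gei.
  exact: sqrtr_ge0.
rewrite (oint_re F G x w V w0 V0).
move: h1; set a := PP F x V; set b := PP F x w; set c := PP G x V; set d := PP G x w.
set Oi := oint _ _ _.
clearbody a b c d Oi => h1.
apply: (@le_trans _ _ ((`|a - c|)%:E + (`|(a - c) - (b - d)|)%:E)%E).
  rewrite -EFinD lee_fin.
  have := ler_normB (a - c) ((a - c) - (b - d)).
  by rewrite (_ : (a - c) - ((a - c) - (b - d)) = b - d) //; ring.
apply: leeD => //; rewrite lee_fin; exact: cmod_ger.
Qed.

End C.

Theorem lemmaB3 (R : realType) (m : nat) (a b : 'I_m -> R)
    (G F : distr_fun R) (g : R -> R) (eps v V : R) :
  (0 < m)%N ->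
  (forall i, a i < b i) ->
  (forall i j, i != j -> b i < a j \/ b j < a i) ->
  distr_support G = Jset a b ->
  (forall x, 0 <= g x) ->
  (exists M : R, forall x, `|g x| <= M) ->
  abs_continuous_fun g ->
  (forall x, G x = \int[lebesgue_measure]_(y in `]-oo, x]) g y) ->
  (forall i, sqrt_behaviour_near g (Jset a b) (a i) /\
             sqrt_behaviour_near g (Jset a b) (b i)) ->
  0 < eps -> (forall i, eps < (b i - a i) / 2) ->
  0 < v -> v <= eps * Num.sqrt eps / (2 * (Num.sqrt 2 + 1)) ->
  v < V ->
  let v' := fun x => v / Num.sqrt (gammaJ a b x) in
  (ereal_sup [set (`| \int[lebesgue_measure]_(u in `]-oo, x])
                      (stieltjes_im F u (v' x) - stieltjes_im G u (v' x)) |)%:E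
             | x in Jprime a b eps]
   <= integral lebesgue_measure setT
        (fun u => (cmod (stieltjes_re F u V - stieltjes_re G u V)
                        (stieltjes_im F u V - stieltjes_im G u V))%:E)
      + ereal_sup [set (cmod
             (oint (v' x) V (fun u => stieltjes_re F x u - stieltjes_re G x u))
             (oint (v' x) V (fun u => stieltjes_im F x u - stieltjes_im G x u)))%:E
             | x in Jprime a b eps])%E.

Proof.
move=> m0 ab disj supp g0 gb gac Gdef sqb eps0 epsb v0 vb vV.
cbv zeta.
apply: ge_ereal_sup => _ [x Jx <-].
have [i [_ gx]] := Jx.
have gpos : 0 < gammaJ a b x.
  by apply: lt_le_trans gx; apply: divr_gt0.
have w0 : 0 < v / Num.sqrt (gammaJ a b x) by apply: divr_gt0 => //; rewrite sqrtr_gt0.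
have V0 : 0 < V by exact: lt_trans v0 vV.
apply: le_trans (key_pt F G x _ V w0 V0) _.
apply: leeD => //.
by apply: ereal_sup_ubound; exists x.
Qed.
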